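(* Let $\mathcal A$ be a finite alphabet and let $W$ be a finite nonempty set of nonempty words over $\mathcal A$ which are pairwise anagrams (all words of $W$ have the same Parikh vector, i.e. each letter occurs the same number of times in each of them). Let $\psi$ be a morphism on $\mathcal A$ such that for every $a\in\mathcal A$, $\psi(a)$ is a nonempty concatenation of words from $W$, and suppose $\psi$ admits an iterative fixed point. Then the ratio $d=|\psi(w)|/|w|$ is the same for all $w\in W$, and every iterative fixed point of $\psi$ is $d$-automatic.
   Context: An iterative fixed point of a morphism $\psi$ is the infinite word $\lim_{n\to\infty}\psi^n(a)$ for a letter $a$ such that $\psi(a)$ begins with $a$ and $|\psi^n(a)|\to\infty$. For an integer $d\ge 2$, a sequence is $d$-automatic if it is the image under a letter-to-letter map of a fixed point of a morphism all of whose letter-images have length $d$. *)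

(* Defs.v *)
From mathcomp Require Import all_boot.
Set Implicit Arguments. Unset Strict Implicit. Unset Printing Implicit Defensive.

Definition mimage (A : Type) (psi : A -> seq A) (w : seq A) : seq A :=
  flatten (map psi w).

Definition miter (A : Type) (psi : A -> seq A) (n : nat) (w : seq A) : seq A :=
  iter n (mimage psi) w.

(* x : nat -> A is the iterative fixed point lim psi^n(a) for the letter a:
   psi(a) begins with a, |psi^n(a)| -> oo, and every psi^n(a) is a prefix of x. *)
Definition is_iter_fixed_point_from (A : Type) (psi : A -> seq A) (a : A)
    (x : nat -> A) : Prop :=
  (exists s, psi a = a :: s) /\
  (forall N, exists n, N < size (miter psi n [:: a])) /\
  (forall n i, i < size (miter psi n [:: a]) -> x i = nth a (miter psi n [:: a]) i).

Definition is_iter_fixed_point (A : Type) (psi : A -> seq A) (x : nat -> A) : Prop :=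
  exists a, is_iter_fixed_point_from psi a x.

Definition admits_iter_fixed_point (A : Type) (psi : A -> seq A) : Prop :=
  exists x, is_iter_fixed_point psi x.

(* d-automatic sequence (d >= 2): image under a letter-to-letter map of an
   iterative fixed point of a d-uniform morphism on a finite alphabet. *)
Definition automatic (A : Type) (d : nat) (x : nat -> A) : Prop :=
  2 <= d /\
  exists (B : finType) (phi : B -> seq B) (tau : B -> A) (y : nat -> B),
    (forall b, size (phi b) = d) /\ is_iter_fixed_point phi y /\
    (forall i, x i = tau (y i)).

Definition concat_of (A : eqType) (W : seq (seq A)) (u : seq A) : Prop :=
  exists ws : seq (seq A), ws != [::] /\ all (fun w => w \in W) ws /\ u = flatten ws.

(* Main.v *)
Require Import Defs.
From mathcomp Require Import all_boot.
From mathcomp Require Import zify.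
Set Implicit Arguments. Unset Strict Implicit. Unset Printing Implicit Defensive.

Lemma mimage_cat (A : Type) (psi : A -> seq A) u v :
  mimage psi (u ++ v) = mimage psi u ++ mimage psi v.
Proof. by rewrite /mimage map_cat flatten_cat. Qed.

Definition cW (A : eqType) (W : seq (seq A)) (u : seq A) :=
  exists ws, all (fun w => w \in W) ws /\ u = flatten ws.

Lemma cW_cat (A : eqType) (W : seq (seq A)) u v : cW W u -> cW W v -> cW W (u ++ v).
Proof.
move=> [ws1 [h1 ->]] [ws2 [h2 ->]]. exists (ws1 ++ ws2).
by rewrite all_cat h1 h2 flatten_cat.
Qed.

Lemma cW_mimage (A : eqType) (W : seq (seq A)) psi :
  (forall a, concat_of W (psi a)) -> forall u, cW W (mimage psi u).
Proof.
move=> hc; elim=> [|c u IH]; first by exists [::].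
rewrite -cat1s mimage_cat; apply: cW_cat => //.
have [ws [_ [h1 h2]]] := hc c. exists ws; split => //. by rewrite /mimage /= cats0.
Qed.

Lemma size_flatten_m (A : Type) (P : pred (seq A)) m ws :
  (forall w, P w -> size w = m) -> all P ws -> size (flatten ws) = m * size ws.
Proof.
move=> hm; elim: ws => [|w ws IH] /=; first by rewrite muln0.
move/andP=> [hw hws]. by rewrite size_cat IH // hm // mulnS.
Qed.

Lemma size_mimage_flatten (A : Type) (psi : A -> seq A) (P : pred (seq A)) d ws :
  (forall w, P w -> size (mimage psi w) = d * size w) -> all P ws ->
  size (mimage psi (flatten ws)) = d * size (flatten ws).
Proof.
move=> hm; elim: ws => [|w ws IH] /=; first by rewrite muln0.
move/andP=> [hw hws]. by rewrite mimage_cat !size_cat IH // hm // mulnDr.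
Qed.

Lemma size_mimage_perm (A : eqType) (psi : A -> seq A) w1 w2 :
  perm_eq w1 w2 -> size (mimage psi w1) = size (mimage psi w2).
Proof.
move=> h; rewrite /mimage !size_flatten /shape -!map_comp.
by apply: perm_sumn; apply: perm_map.
Qed.

Lemma flatten_iota (B : Type) (y : nat -> B) d N :
  flatten (map (fun i => map y (iota (d * i) d)) (iota 0 N)) = map y (iota 0 (d * N)).
Proof.
elim: N => [|N IH]; first by rewrite muln0.
have -> : iota 0 N.+1 = iota 0 N ++ [:: N] by rewrite -addn1 iotaD.
have -> : d * N.+1 = d * N + d by rewrite mulnS addnC.
by rewrite map_cat flatten_cat IH /= cats0 iotaD map_cat.
Qed.

Theorem theorem4p1 (A : finType) (W : seq (seq A)) (psi : A -> seq A) :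
  W != [::] ->
  (forall w, w \in W -> w != [::]) ->
  (forall w1 w2, w1 \in W -> w2 \in W -> perm_eq w1 w2) ->
  (forall a, concat_of W (psi a)) ->
  admits_iter_fixed_point psi ->
  exists d : nat,
    (forall w, w \in W -> size (mimage psi w) = d * size w) /\
    (forall x, is_iter_fixed_point psi x -> automatic d x).
Proof.
move=> hWn hne hperm hc _.
have [w0 hw0] : exists w0, w0 \in W.
  by case: W hWn {hne hperm hc} => [|w W'] // _; exists w; rewrite inE eqxx.
pose m := size w0.
have hm : forall w, w \in W -> size w = m.
  by move=> w hw; apply: perm_size; apply: hperm.
have mpos : 0 < m by rewrite lt0n size_eq0; apply: hne.
have [ws0 [hws0 e0]] := cW_mimage hc w0.
pose d := size ws0.
have hL : size (mimage psi w0) = d * m.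
  by rewrite e0 (size_flatten_m hm hws0) mulnC.
have hd : forall w, w \in W -> size (mimage psi w) = d * size w.
  by move=> w hw; rewrite (size_mimage_perm psi (hperm w w0 hw hw0)) hL hm.
have hdu : forall u, cW W u -> size (mimage psi u) = d * size u.
  by move=> u [ws [hws ->]]; apply: (size_mimage_flatten hd hws).
exists d; split => //.
move=> x [a [[s hs] [hgrow hx]]].
have hmS : forall n u, miter psi n.+1 u = mimage psi (miter psi n u) by [].
have hsz : forall n, size (miter psi n.+1 [:: a]) = d ^ n * size (psi a).
  elim=> [|n IH]; first by rewrite /miter /= /mimage /= cats0 expn0 mul1n.
  rewrite hmS hdu ?IH; first by rewrite expnS mulnA.
  by rewrite hmS; apply: cW_mimage.
have hd2 : 1 < d.
  rewrite ltnNge; apply/negP => hlt.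
  have [n hn] := hgrow (size (psi a)).
  case: n hn => [|n]; first by rewrite /= hs.
  rewrite hsz => hn.
  have hdn : d ^ n <= 1.
    move: hlt; case: (d) => [|[|]] // _; last by rewrite exp1n.
    by case: (n) => [|k]; [rewrite expn0|rewrite exp0n].
  have := leq_mul hdn (leqnn (size (psi a))); rewrite mul1n => h.
  by move: hn; rewrite ltnNge h.
have hK : forall q p, p < d * m ->
    x (d * q * m + p) = nth a (mimage psi [tuple x (q * m + j) | j < m]) p.
  move=> q p hp.
  have [n hn] := hgrow (q.+1 * m).
  case: n hn => [|n] hn.
    have : m <= q.+1 * m by rewrite leq_pmull.
    move: hn; rewrite /=; lia.
  have hxu := hx n.+1.
  have hxu2 : forall i, i < size (mimage psi (miter psi n.+1 [:: a])) ->
     x i = nth a (mimage psi (miter psi n.+1 [:: a])) i := hx n.+2.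
  have hcw : cW W (miter psi n.+1 [:: a]) := cW_mimage hc _.
  move: (miter psi n.+1 [:: a]) hn hxu hxu2 hcw => u hn hxu hxu2 [ws [hws eu]].
  have hsu : size u = m * size ws by rewrite eu (size_flatten_m hm hws).
  have hq : q.+1 < size ws by move: hn; rewrite hsu mulnC ltn_pmul2l.
  have hq' : q < size ws by apply: ltnW.
  have esplit : flatten ws = flatten (take q ws) ++ nth [::] ws q ++ flatten (drop q.+1 ws).
    by rewrite -[in LHS](cat_take_drop q ws) (drop_nth [::] hq') flatten_cat.
  have hwt : all (fun w => w \in W) (take q ws) by rewrite -(cat_take_drop q ws) all_cat in hws; case/andP: hws.
  have hs1 : size (flatten (take q ws)) = q * m.
    by rewrite (size_flatten_m hm hwt) size_take hq' mulnC.
  have hw : nth [::] ws q \in W by apply: (allP hws); apply: mem_nth.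
  have hblk : [tuple x (q * m + j) | j < m] = nth [::] ws q :> seq A.
    apply: (@eq_from_nth _ a); first by rewrite size_tuple hm.
    move=> j; rewrite size_tuple => hj.
    rewrite -[j]/(nat_of_ord (Ordinal hj)) nth_mktuple /=.
    rewrite hxu; last first.
      have : m * q.+1 <= m * size ws by rewrite leq_mul2l ltnW ?orbT.
      rewrite hsu mulnS; lia.
    by rewrite eu esplit nth_cat hs1 ltnNge leq_addr /= addKn nth_cat (hm _ hw) hj.
  rewrite hblk hxu2; last first.
    rewrite hdu; last by exists ws.
    have : d * (m * q.+1) <= d * (m * size ws) by rewrite leq_mul2l leq_mul2l ltnW ?orbT.
    rewrite hsu !mulnS; lia.
  have hct : cW W (flatten (take q ws)) by exists (take q ws).
  rewrite eu esplit !mimage_cat nth_cat (hdu _ hct) hs1 mulnA ltnNge leq_addr /= addKn.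
  by rewrite nth_cat (hd _ hw) (hm _ hw) hp.
have dpos : 0 < d by apply: ltnW.
pose B := (m.-tuple A * 'I_m)%type.
pose y (i : nat) : B := ([tuple x ((i %/ m) * m + j) | j < m], Ordinal (ltn_pmod i mpos)).
pose phi (b : B) : seq B :=
  [seq ([tuple nth a (mimage psi b.1) (((d * b.2 + k) %/ m) * m + j) | j < m],
        Ordinal (ltn_pmod (d * b.2 + k) mpos)) | k <- iota 0 d].
pose tau (b : B) : A := tnth b.1 b.2.
have hG : forall i k, k < d -> nth (y 0) (phi (y i)) k = y (d * i + k).
  move=> i k hk.
  rewrite /phi (nth_map 0) ?size_iota // nth_iota // add0n /y /=.
  have hr : i %% m < m by apply: ltn_pmod.
  have hdr : d * (i %% m) + k < d * m.
    have : d * (i %% m).+1 <= d * m by rewrite leq_mul2l hr orbT.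
    rewrite mulnS; lia.
  have ht : (d * (i %% m) + k) %/ m < d by rewrite ltn_divLR.
  have hdi : d * i + k = (d * (i %/ m)) * m + (d * (i %% m) + k).
    by rewrite {1}(divn_eq i m) mulnDr mulnA addnA.
  congr pair.
    apply: eq_from_tnth => j; rewrite !tnth_mktuple.
    rewrite hdi divnMDl // mulnDl -addnA.
    rewrite hK //.
    have h : ((d * (i %% m) + k) %/ m).+1 * m <= d * m by rewrite leq_mul2r ht orbT.
    apply: leq_trans h; by rewrite mulSn addnC ltn_add2r.
  apply: val_inj => /=.
  by rewrite hdi modnMDl.
have hphi : forall i, phi (y i) = map y (iota (d * i) d).
  move=> i; apply: (@eq_from_nth _ (y 0)); first by rewrite !size_map !size_iota.
  move=> k; rewrite size_map size_iota => hk.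
  by rewrite hG // (nth_map 0) ?size_iota // nth_iota.
have hmit : forall n, miter phi n [:: y 0] = map y (iota 0 (d ^ n)).
  elim=> [|n IH]; first by rewrite expn0.
  rewrite [miter _ _ _]/= -/(miter phi n [:: y 0]) IH /mimage -map_comp.
  rewrite (eq_map (g := fun i => map y (iota (d * i) d))); last by move=> i /=; apply: hphi.
  by rewrite flatten_iota expnS.
split => //.
exists B, phi, tau, y; split; first by move=> b; rewrite size_map size_iota.
split; last first.
  by move=> i; rewrite /tau /y /= tnth_mktuple /= -divn_eq.
exists (y 0); split.
  exists (map y (iota 1 d.-1)).
  rewrite hphi muln0 -[in iota 0 d](prednK dpos). by [].
split.
  move=> N; exists N; rewrite hmit size_map size_iota; exact: ltn_expl.
move=> n i; rewrite hmit size_map size_iota => hi.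
by rewrite (nth_map 0) ?size_iota // nth_iota.
Qed.
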